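(* Let $\mathbf B_n$ be the $n$-th Bell number. Then $\lim_{n\to\infty}\mathbf B_n/\alpha_n(12\text{-}34)=0$.
   Context: A permutation $\pi=\pi_1\cdots\pi_n$ of $\{1,\dots,n\}$ contains the generalized pattern $12\text{-}34$ if there are indices $i<j$ with $i+1<j$ such that $\pi_i<\pi_{i+1}<\pi_j<\pi_{j+1}$; otherwise it avoids it. $\alpha_n(12\text{-}34)$ is the number of permutations of $\{1,\dots,n\}$ avoiding $12\text{-}34$. The Bell number $\mathbf B_n$ is the number of set partitions of an $n$-element set. *)

(* Defs.v *)
From mathcomp Require Import all_boot all_fingroup.
From Stdlib Require Import Reals.

Set Implicit Arguments.
Unset Strict Implicit.
Unset Printing Implicit Defensive.

(* One-line notation of a permutation of {0,...,n-1} (order-isomorphic to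
   {1,...,n}): the sequence pi_0 ... pi_{n-1}. *)
Definition perm_word (n : nat) (pi : 'S_n) : seq nat :=
  [seq val (pi i) | i <- enum 'I_n].

Definition contains_12_34 (n : nat) (pi : 'S_n) : bool :=
  let s := perm_word pi in
  [exists i : 'I_n, exists j : 'I_n,
     [&& i.+1 < j, j.+1 < n,
         nth 0 s i < nth 0 s i.+1,
         nth 0 s i.+1 < nth 0 s j &
         nth 0 s j < nth 0 s j.+1]].

Definition alpha_12_34 (n : nat) : nat :=
  #|[set pi : 'S_n | ~~ contains_12_34 pi]|.

Definition bell (n : nat) : nat :=
  #|[set P : {set {set 'I_n}} | partition P [set: 'I_n]]|.

(* Main.v *)
Require Import Defs.
From mathcomp Require Import all_boot all_fingroup.
From Stdlib Require Import Reals.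
From mathcomp Require Import all_boot zify.
From Stdlib Require Import Lia Lra Psatz.

Set Implicit Arguments.
Unset Strict Implicit.
Unset Printing Implicit Defensive.

Section PC.
Variable T : finType.
Definition pc (D : {set T}) := #|[set P : {set {set T}} | partition P D]|.

Lemma pc_le_pow D : pc D <= 2 ^ (2 ^ #|D|).
Proof.
rewrite -!card_powerset; apply: subset_leq_card; apply/subsetP => P.
rewrite !inE => hP; apply/subsetP => B hB; by rewrite inE (partitionS hP hB).
Qed.

Definition Bx (D : {set T}) (x : T) := [set B : {set T} | (x \in B) && (B \subset D)].

Lemma pc_rec (D : {set T}) (x : T) : x \in D -> pc D <= \sum_(B in Bx D x) pc (D :\: B).
Proof.
move=> xD; rewrite /pc -sum1_card.
rewrite (partition_big (fun P => pblock P x) (mem (Bx D x))) /=; last first.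
  move=> P; rewrite inE => hP; rewrite inE.
  have xc : x \in cover P by rewrite (cover_partition hP).
  by rewrite mem_pblock xc (partitionS hP (pblock_mem xc)).
apply: leq_sum => B BB; rewrite sum1_card.
set S := [set P | _ ].
have -> : #|[pred i in S | pblock i x == B]| = #|(fun P => P :\ B) @: [set P in S | pblock P x == B]|.
  rewrite card_in_imset; first by apply: eq_card => P; rewrite !inE.
  move=> P Q; rewrite !inE => /andP[hP /eqP pP] /andP[hQ /eqP pQ] e.
  have xP : x \in cover P by rewrite (cover_partition hP).
  have xQ : x \in cover Q by rewrite (cover_partition hQ).
  have BP : B \in P by rewrite -pP pblock_mem.
  have BQ : B \in Q by rewrite -pQ pblock_mem.
  by rewrite -(setD1K BP) -(setD1K BQ) e.
apply: subset_leq_card; apply/subsetP => Q /imsetP[P]; rewrite !inE => /andP[hP /eqP pP] ->.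
have xP : x \in cover P by rewrite (cover_partition hP).
have BP : B \in P by rewrite -pP pblock_mem.
exact: partitionD1.
Qed.
End PC.
Section S.
Variable T : finType.

Lemma sum_powerset (A : {set T}) (f : nat -> nat) :
  \sum_(E in powerset A) f #|E| = \sum_(k < #|A|.+1) 'C(#|A|, k) * f k.
Proof.
transitivity (\sum_(E in powerset A) \sum_(k < #|A|.+1) (#|E| == k) * f k).
  apply: eq_bigr => E; rewrite inE => EA.
  have hE : #|E| < #|A|.+1 by rewrite ltnS subset_leq_card.
  rewrite (bigD1 (Ordinal hE)) //= eqxx mul1n big1 ?addn0 // => k /negPf.
  by rewrite -val_eqE /= eq_sym => ->.
rewrite exchange_big /=; apply: eq_bigr => k _.
rewrite (eq_bigr (fun E : {set T} => if #|E| == k then f k else 0)); last by move=> E _; case: (_ == _); rewrite ?mul1n ?mul0n.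
rewrite -big_mkcondr /= sum_nat_const -cards_draws; congr (_ * _).
by apply: eq_card => E; rewrite -topredE /= !inE.
Qed.

Lemma sum_Bx (D : {set T}) (x : T) (f : nat -> nat) : x \in D ->
  \sum_(B in [set B : {set T} | (x \in B) && (B \subset D)]) f #|D :\: B|
  = \sum_(k < #|D|) 'C(#|D|.-1, k) * f k.
Proof.
move=> xD.
have inj : {in [set B : {set T} | (x \in B) && (B \subset D)] &, injective (fun B => D :\: B)}.
  move=> B1 B2; rewrite !inE => /andP[_ h1] /andP[_ h2] e.
  have k (B : {set T}) : B \subset D -> D :\: (D :\: B) = B.
    by move=> hB; rewrite setDDr setDv set0U; apply/setIidPr.
  by rewrite -(k B1 h1) -(k B2 h2) e.
rewrite -(big_imset (fun E : {set T} => f #|E|) inj) /=.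
have -> : [set D :\: B | B in [set B : {set T} | (x \in B) && (B \subset D)]] = powerset (D :\ x).
  apply/setP => E; rewrite inE; apply/imsetP/idP.
    move=> [B]; rewrite inE => /andP[xB BD] ->.
    by apply/subsetP => y; rewrite !inE => /andP[yB yD]; rewrite yD andbT; apply: contraNneq yB => ->.
  move=> ED; exists (D :\: E); last first.
    by rewrite setDDr setDv set0U; apply/esym/setIidPr; apply: subset_trans ED (subsetDl _ _).
  rewrite inE subsetDl andbT inE xD andbT; apply/negP => xE.
  by have := subsetP ED x xE; rewrite !inE eqxx.
rewrite sum_powerset.
have hc : #|D :\ x|.+1 = #|D| by rewrite (cardsD1 x D) xD.
have hc' : #|D :\ x| = #|D|.-1 by rewrite -hc.
rewrite hc'.
by rewrite -hc'; case: _ / hc.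
Qed.
End S.
Fixpoint Sr (n : nat) : nat := if n is n'.+1 then 3 ^ n'.+2 + n'.+1 * Sr n' else 3.

Lemma S_Sr n : \sum_(k < n.+1) 'C(n, k) * (3 ^ (n.+1 - k) * k`!) = Sr n.
Proof.
elim: n => [|n IH]; first by rewrite big_ord_recl big_ord0.
rewrite big_ord_recl /= bin0 fact0 subn0 !muln1 mul1n; congr (_ + _).
rewrite -IH big_distrr /=; apply: eq_bigr => k _.
rewrite /bump /= add1n subSS.
have e := bin_ffact n.+1 k.+1; rewrite ffactSS -bin_ffact in e.
by rewrite mulnCA e mulnCA; congr (_ * _); rewrite mulnCA.
Qed.

Lemma Sr_inv n : 3 <= n -> (n - 2) * Sr n + 3 ^ n.+2 <= 80 * (n - 2) * n`!.
Proof.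
elim: n => [|n IH] //; rewrite ltnS leq_eqVlt => /orP[/eqP <- | h3]; first by vm_compute.
have := IH h3. rewrite /= factS.
set S := Sr n; set F := n`!; set t := 3 ^ n.+2.
have -> : 3 ^ n.+3 = 3 * t by rewrite /t expnS.
move=> H.
have hm : 1 <= n - 2 by lia.
set m := n - 2 in H hm.
have -> : n.+1 - 2 = m + 1 by rewrite /m; lia.
have hn : n = m + 2 by rewrite /m; lia.
rewrite hn in H *.
have H2 : m * ((m + 1) * (t + (m + 3) * S) + 3 * t) <= m * (80 * (m + 1) * ((m + 3) * F)) by nia.
rewrite leq_pmul2l in H2; last by lia.
by move: H2; rewrite addnS !addnS /= !addn0 ?addn2 ?addn3; nia.
Qed.

Lemma Sr_small n : 79 <= n -> Sr n <= n.+1`!.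
Proof.
move=> h; have := @Sr_inv n (leq_trans (isT : 3 <= 79) h).
rewrite factS => H.
have H1 : (n - 2) * Sr n <= (n - 2) * (80 * n`!) by rewrite mulnCA mulnA; lia.
rewrite leq_pmul2l in H1; last by lia.
apply: (leq_trans H1); rewrite leq_mul2r; lia.
Qed.

Lemma pc_bound (c K : nat) : 79 <= c -> 3 ^ c * 2 ^ (2 ^ c) <= K ->
  forall (T : finType) (D : {set T}), 3 ^ #|D| * pc D <= K * #|D|`!.
Proof.
move=> hc hK T D.
have [d] := ubnP #|D|; elim: d D => [D|d IH D hD]; first by rewrite ltn0.
have [small | big] := leqP #|D| c.
  apply: leq_trans (leq_pmulr _ (fact_gt0 _)).
  apply: (leq_trans _ hK).
  apply: leq_mul; first by rewrite leq_pexp2l.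
  apply: leq_trans (pc_le_pow D) _.
  by rewrite leq_pexp2l // leq_pexp2l.
have : D != set0 by rewrite -card_gt0; lia.
case/set0Pn => x xD.
have [n hn] : exists n, #|D| = n.+1 by exists #|D|.-1; lia.
apply: leq_trans (leq_mul (leqnn _) (pc_rec xD)) _.
rewrite big_distrr /=.
apply: leq_trans (_ : \sum_(B in Bx D x) (3 ^ (#|D| - #|D :\: B|) * (K * #|D :\: B|`!)) <= _).
  apply: leq_sum => B; rewrite inE => /andP[xB BD].
  have hlt : #|D :\: B| < #|D|.
    by apply: proper_card; apply/properP; split; [exact: subsetDl | exists x; rewrite // !inE xB].
  have hle := ltnW hlt.
  rewrite -{1}(subnK hle) expnD -mulnA leq_mul2l; apply/orP; right.
  apply: IH; lia.
rewrite /Bx (sum_Bx (fun k => 3 ^ (#|D| - k) * (K * k`!)) xD) hn /=.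
apply: leq_trans (_ : K * Sr n <= _); last first.
  rewrite leq_mul2l; apply/orP; right; apply: Sr_small; lia.
rewrite -S_Sr big_distrr /=; apply: eq_leq; apply: eq_bigr => k _.
by rewrite !mulnA -!(mulnC K) !mulnA.
Qed.

Lemma bell_bound : exists K, 0 < K /\ forall n, 3 ^ n * bell n <= K * n`!.
Proof.
have [K hK] : exists K, 3 ^ 80 * 2 ^ (2 ^ 80) <= K.
  by exists (3 ^ 80 * 2 ^ (2 ^ 80)); exact: leqnn.
exists K; split.
  apply: leq_trans hK; rewrite muln_gt0; apply/andP; split; exact: expn_gt0.
move=> n; have := @pc_bound 80 K isT hK _ [set: 'I_n].
rewrite cardsT card_ord => h; exact: h.
Qed.

Lemma nth_pw m (s : 'S_m) (i : 'I_m) : nth 0 (perm_word s) i = s i.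
Proof. by rewrite /perm_word (nth_map i) ?size_enum_ord // nth_ord_enum. Qed.

Lemma pw_lt m (s : 'S_m) k : k < m -> nth 0 (perm_word s) k < m.
Proof. by move=> hk; rewrite (nth_pw s (Ordinal hk)). Qed.

Lemma hb i : i = odd i + (i./2) * 2.
Proof. by rewrite muln2 odd_double_half. Qed.

Lemma half_odd i n : i < n -> odd i -> i./2 < n./2.
Proof.
move=> h o; move: (hb i) (hb n); rewrite o; case: (odd n) => /= e1 e2; lia.
Qed.

Lemma half_even i n : i < n -> ~~ odd i -> i./2 < uphalf n.
Proof.
move=> h o; rewrite uphalf_half; move: (hb i) (hb n); rewrite (negbTE o); case: (odd n) => /= e1 e2; lia.
Qed.

Section Alt.
Variable n : nat.
Notation e := (uphalf n).
Notation o := (n./2).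

Lemma eo : e + o = n.
Proof. rewrite uphalf_half; move: (hb n); lia. Qed.

Definition gf (s : 'S_e) (t : 'S_o) (i : nat) : nat :=
  if odd i then e + nth 0 (perm_word t) i./2 else nth 0 (perm_word s) i./2.

Lemma gf_lt s t (i : 'I_n) : gf s t i < n.
Proof.
rewrite /gf; case: ifP => oi.
  have := pw_lt t (half_odd (ltn_ord i) oi); have := eo; lia.
have := pw_lt s (half_even (ltn_ord i) (negbT oi)); have := eo; lia.
Qed.

Lemma gf_par s t i : i < n -> (e <= gf s t i) = odd i.
Proof.
move=> hi; rewrite /gf; case: ifP => oi; first by rewrite leq_addr.
by apply/negbTE; rewrite -ltnNge; apply: pw_lt; apply: half_even => //; rewrite oi.
Qed.

Definition hf s t (i : 'I_n) : 'I_n := Ordinal (gf_lt s t i).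

Lemma hf_inj s t : injective (hf s t).
Proof.
move=> i j /(congr1 val) /= eij.
have pi := gf_par s t (ltn_ord i); have pj := gf_par s t (ltn_ord j).
have op : odd i = odd j by rewrite -pi -pj eij.
apply/val_inj => /=; rewrite (hb i) (hb j) op; congr (_ + _ * 2).
move: eij; rewrite /gf op; case: ifP => oj.
  have h1 := half_odd (ltn_ord i) (etrans op oj); have h2 := half_odd (ltn_ord j) oj.
  move/addnI; rewrite (nth_pw t (Ordinal h1)) (nth_pw t (Ordinal h2)) => /val_inj /perm_inj.
  by move/(congr1 val).
have h1 := half_even (ltn_ord i) (negbT (etrans op oj)); have h2 := half_even (ltn_ord j) (negbT oj).
rewrite (nth_pw s (Ordinal h1)) (nth_pw s (Ordinal h2)) => /val_inj /perm_inj.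
by move/(congr1 val).
Qed.

Definition Phi (p : 'S_e * 'S_o) : 'S_n := perm (@hf_inj p.1 p.2).

Lemma nth_Phi p k : k < n -> nth 0 (perm_word (Phi p)) k = gf p.1 p.2 k.
Proof. by move=> hk; rewrite (nth_pw _ (Ordinal hk)) permE. Qed.

Lemma Phi_avoid p : ~~ contains_12_34 (Phi p).
Proof.
apply/negP; rewrite /contains_12_34 => /existsP[i] /existsP[j] /and5P[hij hj h1 h2 h3].
have hi1 : i.+1 < n by lia.
have hj' : (j : nat) < n by lia.
move: h1 h2 h3; rewrite !nth_Phi //.
have P1 := gf_par p.1 p.2 (ltn_ord i); have P2 := gf_par p.1 p.2 hi1.
have P3 := gf_par p.1 p.2 hj'; have P4 := gf_par p.1 p.2 hj.
rewrite /= in P2 P4.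
case oi : (odd i) P1 P2 => /= P1 P2.
  move=> h1; exfalso; move: P1 P2; lia.
case oj : (odd j) P3 P4 => /= P3 P4.
  move=> _ _ h3; exfalso; move: P3 P4; lia.
move=> _ h2 _; move: P2 P3; lia.
Qed.

Lemma Phi_inj : injective Phi.
Proof.
move=> [s t] [s' t'] E.
have H k : k < n -> gf s t k = gf s' t' k.
  by move=> hk; rewrite -(nth_Phi (s, t) hk) -(nth_Phi (s', t') hk) E.
congr (_, _); apply/perm.permP => k; apply/val_inj.
  have hk : k.*2 < n.
    have := ltn_ord k; move: (uphalf_half n) (hb n); rewrite -muln2; case: (odd n) => /=; lia.
  have := H _ hk; rewrite /gf odd_double doubleK.
  by rewrite !(nth_pw _ k).
have hk : k.*2.+1 < n.
  have := ltn_ord k; move: (hb n); rewrite -muln2; case: (odd n) => /=; lia.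
have := H _ hk; rewrite /gf /= odd_double /= uphalf_double.
by rewrite !(nth_pw _ k) => /addnI.
Qed.

Lemma alpha_lb : e`! * o`! <= alpha_12_34 n.
Proof.
rewrite -!card_Sn -card_prod -cardsT -(card_in_imset (f := Phi) (D := [set: 'S_e * 'S_o])); last first.
  by move=> x y _ _; apply: Phi_inj.
apply: subset_leq_card; apply/subsetP => q /imsetP[p _ ->].
by rewrite inE Phi_avoid.
Qed.
End Alt.

Lemma bin_le_exp n m : 'C(n, m) <= 2 ^ n.
Proof.
elim: n m => [|n IH] [|m] //; first by rewrite bin0 expn_gt0.
by rewrite binS expnS mul2n -addnn leq_add.
Qed.

Lemma key_nat K n : (forall n, 3 ^ n * bell n <= K * n`!) ->
  3 ^ n * bell n <= K * 2 ^ n * alpha_12_34 n.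
Proof.
move=> HB; have H := HB n.
apply: (leq_trans H); rewrite -mulnA leq_mul2l; apply/orP; right.
have ho : n./2 <= n by rewrite -{2}(eo n) leq_addl.
have he : n - n./2 = uphalf n by rewrite -{1}(eo n) addnK.
rewrite -(bin_fact ho) he.
apply: leq_mul; first exact: bin_le_exp.
by rewrite mulnC; apply: alpha_lb.
Qed.

Lemma alpha_pos n : 0 < alpha_12_34 n.
Proof. apply: leq_trans (alpha_lb n); by rewrite muln_gt0 !fact_gt0. Qed.

Lemma INR_expn a n : INR (a ^ n) = pow (INR a) n.
Proof.
elim: n => [|n IH] //=; by rewrite expnS mulnE mult_INR IH.
Qed.

Open Scope R_scope.

Lemma ratio_bound K n : (forall n, (3 ^ n * bell n <= K * n`!)%nat) ->
  INR (bell n) / INR (alpha_12_34 n) <= INR K * pow (2 / 3) n.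
Proof.
move=> HB; have H := key_nat n HB.
move/leP: H => /le_INR; rewrite !mulnE !mult_INR !INR_expn => H.
have ha : 0 < INR (alpha_12_34 n) by apply: lt_0_INR; apply/ltP; apply: alpha_pos.
have h3 : 0 < pow (INR 3) n by apply: pow_lt; apply: lt_0_INR; apply/ltP.
have hq : pow (2 / 3) n * pow (INR 3) n = pow (INR 2) n.
  rewrite -Rpow_mult_distr; congr (pow _ _); simpl; field.
apply (Rmult_le_reg_r (INR (alpha_12_34 n))) => //.
have -> : INR (bell n) / INR (alpha_12_34 n) * INR (alpha_12_34 n) = INR (bell n) by field; lra.
apply (Rmult_le_reg_l (pow (INR 3) n)) => //.
rewrite -hq in H; nra.
Qed.

From Stdlib Require Import Reals.

Theorem mainTheorem6 :
  Un_cv (fun n : nat => (INR (bell n) / INR (alpha_12_34 n))%R) 0%R.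
Proof.
move=> eps He.
have [K [K0 HB]] := bell_bound.
have hK : 0 < INR K by apply: lt_0_INR; apply/ltP.
have h23 : Rabs (2 / 3) < 1 by rewrite Rabs_right; lra.
have he' : 0 < eps / INR K by apply: Rdiv_lt_0_compat; lra.
have [N HN] := pow_lt_1_zero (2 / 3) h23 (eps / INR K) he'.
exists N => n hn; rewrite /R_dist Rminus_0_r.
have ha : 0 < INR (alpha_12_34 n) by apply: lt_0_INR; apply/ltP; apply: alpha_pos.
have hb : 0 <= INR (bell n) / INR (alpha_12_34 n).
  rewrite /Rdiv; apply: Rmult_le_pos; [apply: pos_INR | apply: Rlt_le; apply: Rinv_0_lt_compat; lra].
rewrite Rabs_right; last lra.
have := HN n hn; rewrite Rabs_right; last by apply: Rle_ge; apply: pow_le; lra.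
move=> h1; apply: Rle_lt_trans (ratio_bound n HB) _.
have -> : eps = INR K * (eps / INR K) by field; lra.
by apply: Rmult_lt_compat_l.
Qed.
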